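(* Let $(G,\tau)$ be a Hausdorff topological group. (i) If $(G,\tau)$ is metrizable and compact, then $(G,\mathcal{S}_\tau)$ is $b$-bounded. (ii) If $(G,\tau)$ is countably infinite and metrizable, then $(G,\mathcal{S}_\tau)$ is not $b$-bounded.
   Context: $\mathcal{S}_\tau$ is the smallest group ideal on $G$ containing every set $\{x\}\cup\{x_n:n\in\omega\}$ with $x_n\to x$ in $(G,\tau)$. A group ideal on $G$ is a family of subsets containing all finite subsets, closed under subsets and under $(A,B)\mapsto AB^{-1}$; it defines the coarse structure on $G$ with base $\{\{(x,y):x\in Ay\}:A\in\mathcal{I}\}$, and the bounded subsets of $(G,\mathcal{I})$ are exactly the members of $\mathcal{I}$. A function $f:(X,\mathcal{E})\to\mathbb{R}$ is bornologous if $f(B)$ is bounded in $\mathbb{R}$ for every bounded subset $B$ of $X$. A coarse space is $b$-bounded if every bornologous function on it is bounded. *)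

(* Defs.v *)
From Stdlib Require Import Reals List.
Open Scope R_scope.

Section Defs.
Variable G : Type.

Definition is_group (mul : G -> G -> G) (inv : G -> G) (e : G) : Prop :=
  (forall x y z, mul x (mul y z) = mul (mul x y) z) /\
  (forall x, mul e x = x) /\ (forall x, mul x e = x) /\
  (forall x, mul (inv x) x = e) /\ (forall x, mul x (inv x) = e).

Definition is_topology (tau : (G -> Prop) -> Prop) : Prop :=
  tau (fun _ => True) /\
  (forall U V, tau U -> tau V -> tau (fun x => U x /\ V x)) /\
  (forall F : (G -> Prop) -> Prop, (forall U, F U -> tau U) ->
     tau (fun x => exists U, F U /\ U x)).

Definition is_topological_group (mul : G -> G -> G) (inv : G -> G) (e : G)
    (tau : (G -> Prop) -> Prop) : Prop :=
  is_group mul inv e /\ is_topology tau /\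
  (forall U x y, tau U -> U (mul x y) ->
     exists V W, tau V /\ tau W /\ V x /\ W y /\
       (forall v w, V v -> W w -> U (mul v w))) /\
  (forall U, tau U -> tau (fun x => U (inv x))).

Definition is_hausdorff (tau : (G -> Prop) -> Prop) : Prop :=
  forall x y, x <> y -> exists U V, tau U /\ tau V /\ U x /\ V y /\
    (forall z, U z -> V z -> False).

Definition is_metric (d : G -> G -> R) : Prop :=
  (forall x y, 0 <= d x y) /\ (forall x y, d x y = 0 <-> x = y) /\
  (forall x y, d x y = d y x) /\ (forall x y z, d x z <= d x y + d y z).

Definition is_metrizable (tau : (G -> Prop) -> Prop) : Prop :=
  exists d, is_metric d /\
    forall U, tau U <-> (forall x, U x -> exists eps, 0 < eps /\
                           forall y, d x y < eps -> U y).

Definition is_compact (tau : (G -> Prop) -> Prop) : Prop :=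
  forall (I : Type) (U : I -> G -> Prop), (forall i, tau (U i)) ->
    (forall x, exists i, U i x) ->
    exists l : list I, forall x, exists i, In i l /\ U i x.

Definition countably_infinite : Prop :=
  exists f : nat -> G, (forall n m, f n = f m -> n = m) /\ (forall x, exists n, f n = x).

Definition converges (tau : (G -> Prop) -> Prop) (s : nat -> G) (x : G) : Prop :=
  forall U, tau U -> U x -> exists N, forall n, (N <= n)%nat -> U (s n).

Definition finite_set (A : G -> Prop) : Prop :=
  exists l : list G, forall x, A x -> In x l.

Definition set_mul_inv (mul : G -> G -> G) (inv : G -> G) (A B : G -> Prop) : G -> Prop :=
  fun z => exists a b, A a /\ B b /\ z = mul a (inv b).

Definition group_ideal (mul : G -> G -> G) (inv : G -> G)
    (I : (G -> Prop) -> Prop) : Prop :=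
  (forall A, finite_set A -> I A) /\
  (forall A B, I A -> (forall x, B x -> A x) -> I B) /\
  (forall A B, I A -> I B -> I (set_mul_inv mul inv A B)).

Definition S_tau (mul : G -> G -> G) (inv : G -> G) (tau : (G -> Prop) -> Prop)
    (A : G -> Prop) : Prop :=
  forall I, group_ideal mul inv I ->
    (forall (s : nat -> G) x, converges tau s x ->
        I (fun y => y = x \/ exists n, y = s n)) ->
    I A.

(* For the coarse space (G, I) given by a group ideal I, the bounded subsets
   are exactly the members of I. *)
Definition bornologous (I : (G -> Prop) -> Prop) (f : G -> R) : Prop :=
  forall B, I B -> exists M, forall x, B x -> Rabs (f x) <= M.

Definition b_bounded (I : (G -> Prop) -> Prop) : Prop :=
  forall f : G -> R, bornologous I f -> exists M, forall x, Rabs (f x) <= M.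

End Defs.

Arguments is_group {G}. Arguments is_topology {G}. Arguments is_topological_group {G}.
Arguments is_hausdorff {G}. Arguments is_metric {G}. Arguments is_metrizable {G}.
Arguments is_compact {G}. Arguments converges {G}. Arguments finite_set {G}.
Arguments set_mul_inv {G}. Arguments group_ideal {G}. Arguments S_tau {G}.
Arguments bornologous {G}. Arguments b_bounded {G}.

(* Main.v *)
Require Import Defs.
From Stdlib Require Import Reals List.
From Stdlib Require Import ZArith Lra Lia Classical ClassicalEpsilon.
Open Scope R_scope.

Lemma ch {A B : Type} (P : A -> B -> Prop) :
  (forall a, exists b, P a b) -> exists f : A -> B, forall a, P a (f a).
Proof.
  intro H. exists (fun a => proj1_sig (constructive_indefinite_description _ (H a))).
  intro a. exact (proj2_sig (constructive_indefinite_description _ (H a))).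
Qed.

Lemma arch (r : R) : exists n : nat, r < INR n.
Proof.
  destruct (archimed r) as [H1 _].
  destruct (Rle_or_lt r 0) as [Hr|Hr].
  - exists 1%nat. simpl. lra.
  - exists (Z.to_nat (up r)).
    rewrite INR_IZR_INZ, Z2Nat.id; [lra|].
    apply le_IZR. simpl. lra.
Qed.

Definition metr_of {G} (tau : (G -> Prop) -> Prop) (d : G -> G -> R) :=
  forall U, tau U <-> (forall x, U x -> exists eps, 0 < eps /\
                           forall y, d x y < eps -> U y).

Lemma d_pos {G} (d : G -> G -> R) : is_metric d -> forall x y, x <> y -> 0 < d x y.
Proof.
  intros [H0 [H1 _]] x y Hxy. destruct (H0 x y) as [H|H]; auto.
  exfalso. apply Hxy. apply H1. auto.
Qed.

Lemma ball_open {G} (tau : (G->Prop)->Prop) d : is_metric d -> metr_of tau d ->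
  forall z r, tau (fun y => d z y < r).
Proof.
  intros [_ [_ [_ Htri]]] Hiff z r. apply Hiff. intros x Hx. exists (r - d z x).
  split; [lra|]. intros y Hy. pose proof (Htri z x y). lra.
Qed.

Lemma conv_metric {G} (tau : (G->Prop)->Prop) d : is_metric d -> metr_of tau d ->
  forall s z, converges tau s z ->
  forall eps, 0 < eps -> exists N, forall n, (N <= n)%nat -> d z (s n) < eps.
Proof.
  intros Hm Hiff s z Hc eps He. apply (Hc (fun y => d z y < eps)).
  - apply (ball_open tau d Hm Hiff).
  - simpl. destruct Hm as [_ [H1 _]]. assert (d z z = 0) by (apply H1; auto). lra.
Qed.

Lemma metric_conv {G} (tau : (G->Prop)->Prop) d : is_metric d -> metr_of tau d ->
  forall s z, (forall eps, 0 < eps -> exists N, forall n, (N <= n)%nat -> d z (s n) < eps) ->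
  converges tau s z.
Proof.
  intros Hm Hiff s z H U HU Hz. destruct (proj1 (Hiff U) HU z Hz) as [eps [He Hb]].
  destruct (H eps He) as [N HN]. exists N. intros n Hn. apply Hb. apply HN. auto.
Qed.

Lemma cluster {G} (tau : (G->Prop)->Prop) d : is_metric d -> metr_of tau d -> is_compact tau ->
  forall x : nat -> G, exists z, forall eps, 0 < eps -> forall N, exists n, (N <= n)%nat /\ d z (x n) < eps.
Proof.
  intros Hm Hiff Hc x. apply NNPP. intro Hno.
  assert (Hz : forall z, exists p : R * nat, 0 < fst p /\ forall n, (snd p <= n)%nat -> fst p <= d z (x n)).
  { intro z. apply NNPP. intro Hn. apply Hno. exists z. intros eps He N. apply NNPP. intro Hn2.
    apply Hn. exists (eps, N). simpl. split; auto. intros n Hn3. apply Rnot_lt_le. intro Hlt.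
    apply Hn2. exists n. auto. }
  set (I := {q : G * (R * nat) | 0 < fst (snd q) /\ forall n, (snd (snd q) <= n)%nat -> fst (snd q) <= d (fst q) (x n)}).
  set (U := fun (i : I) (y : G) => d (fst (proj1_sig i)) y < fst (snd (proj1_sig i))).
  destruct (Hc I U) as [l Hl].
  - intro i. apply (ball_open tau d Hm Hiff).
  - intro y. destruct (Hz y) as [p Hp]. exists (exist _ (y, p) Hp). unfold U; simpl.
    destruct Hm as [_ [H1 _]]. assert (d y y = 0) by (apply H1; auto). destruct Hp. lra.
  - assert (Hmax : exists N, forall i, In i l -> (snd (snd (proj1_sig i)) <= N)%nat).
    { clear Hl. induction l as [|a l IH].
      - exists 0%nat. intros i [].
      - destruct IH as [N HN]. exists (Nat.max N (snd (snd (proj1_sig a)))). intros i [Hi|Hi].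
        + subst. lia.
        + specialize (HN i Hi). lia. }
    destruct Hmax as [N HN]. destruct (Hl (x N)) as [i [Hi HU]].
    pose proof (proj2 (proj2_sig i) N (HN i Hi)). unfold U in HU. lra.
Qed.

Lemma part1 {G} (mul : G -> G -> G) inv (tau : (G->Prop)->Prop) :
  is_metrizable tau -> is_compact tau -> b_bounded (S_tau mul inv tau).
Proof.
  intros [d [Hm Hiff]] Hc f Hf. apply NNPP. intro Hnb.
  assert (Hx : forall n : nat, exists x, INR n < Rabs (f x)).
  { intro n. apply NNPP. intro Hn. apply Hnb. exists (INR n). intro x. apply Rnot_lt_le.
    intro Hl. apply Hn. exists x. auto. }
  destruct (ch _ Hx) as [xs Hxs].
  destruct (cluster tau d Hm Hiff Hc xs) as [z Hz].
  assert (Hk : forall k, exists n, (k <= n)%nat /\ d z (xs n) < / INR (S k)).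
  { intro k. apply Hz. apply Rinv_0_lt_compat. apply lt_0_INR. lia. }
  destruct (ch _ Hk) as [nk Hnk].
  set (s := fun k => xs (nk k)).
  assert (Hconv : converges tau s z).
  { apply (metric_conv tau d Hm Hiff). intros eps He.
    destruct (arch (/ eps)) as [N HN]. exists N. intros k Hk'. unfold s.
    destruct (Hnk k) as [_ Hd]. eapply Rlt_trans; [exact Hd|].
    assert (INR N <= INR k) by (apply le_INR; auto).
    assert (HSk : INR k < INR (S k)) by (apply lt_INR; lia).
    assert (0 < / eps) by (apply Rinv_0_lt_compat; auto).
    rewrite <- (Rinv_inv eps). apply Rinv_lt_contravar.
    - apply Rmult_lt_0_compat; [auto | lra].
    - lra. }
  assert (HS : S_tau mul inv tau (fun y => y = z \/ exists n, y = s n)).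
  { intros I HI Hgen. apply Hgen. exact Hconv. }
  destruct (Hf _ HS) as [M HM].
  destruct (arch M) as [k Hk2].
  assert (H1 : Rabs (f (s k)) <= M) by (apply HM; right; exists k; auto).
  pose proof (Hxs (nk k)). destruct (Hnk k) as [Hle _].
  assert (INR k <= INR (nk k)) by (apply le_INR; auto).
  unfold s in H1. lra.
Qed.

Definition Jset {G} (tau : (G->Prop)->Prop) (A : G -> Prop) : Prop :=
  forall y : nat -> G, (forall k, A (y k)) ->
    exists (m : nat -> nat) z, (forall n, (n <= m n)%nat) /\ converges tau (fun n => y (m n)) z.

Lemma conv_sub {G} (tau : (G->Prop)->Prop) s z (m : nat -> nat) :
  converges tau s z -> (forall n, (n <= m n)%nat) -> converges tau (fun n => s (m n)) z.
Proof.
  intros Hc Hm U HU Hz. destruct (Hc U HU Hz) as [N HN]. exists N. intros n Hn.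
  apply HN. specialize (Hm n). lia.
Qed.

Lemma conv_inv {G} (tau : (G->Prop)->Prop) (inv : G -> G) s z :
  (forall U, tau U -> tau (fun x => U (inv x))) ->
  converges tau s z -> converges tau (fun n => inv (s n)) (inv z).
Proof. intros Hi Hc U HU Hz. apply (Hc (fun x => U (inv x))); auto. Qed.

Lemma conv_mul {G} (tau : (G->Prop)->Prop) (mul : G -> G -> G) a b x y :
  (forall U x y, tau U -> U (mul x y) ->
     exists V W, tau V /\ tau W /\ V x /\ W y /\
       (forall v w, V v -> W w -> U (mul v w))) ->
  converges tau a x -> converges tau b y -> converges tau (fun n => mul (a n) (b n)) (mul x y).
Proof.
  intros Hmc Ha Hb U HU Hxy. destruct (Hmc U x y HU Hxy) as [V [W [HV [HW [Vx [Wy Hvw]]]]]].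
  destruct (Ha V HV Vx) as [N1 H1]; destruct (Hb W HW Wy) as [N2 H2].
  exists (Nat.max N1 N2); intros n Hn; apply Hvw; [apply H1|apply H2]; lia.
Qed.

Lemma pigeon {G} (l : list G) (y : nat -> G) :
  (exists N, forall k, (N <= k)%nat -> In (y k) l) ->
  exists a, forall N, exists k, (N <= k)%nat /\ y k = a.
Proof.
  revert y. induction l as [|a l IH]; intros y [N HN].
  - destruct (HN N (le_n N)).
  - destruct (classic (forall M, exists k, (M <= k)%nat /\ y k = a)) as [H|H].
    + exists a. exact H.
    + apply not_all_ex_not in H. destruct H as [M HM]. apply IH. exists (Nat.max N M).
      intros k Hk. destruct (HN k ltac:(lia)) as [E|E]; auto. exfalso. apply HM.
      exists k. split; [lia|now symmetry].
Qed.

Lemma J_fin {G} (tau : (G->Prop)->Prop) A : finite_set A -> Jset tau A.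
Proof.
  intros [l Hl] y Hy. destruct (pigeon l y) as [a Ha].
  { exists 0%nat. intros k _. apply Hl. apply Hy. }
  destruct (ch _ Ha) as [m Hm]. exists m, a. split; [intro n; apply Hm|].
  intros U HU Ha'. exists 0%nat. intros n _. destruct (Hm n) as [_ E]. rewrite E. auto.
Qed.

Lemma J_mul {G} mul inv (e : G) tau : is_topological_group mul inv e tau ->
  forall A B, Jset tau A -> Jset tau B -> Jset tau (set_mul_inv mul inv A B).
Proof.
  intros [_ [_ [Hmc Hic]]] A B HA HB y Hy.
  assert (H : forall k, exists p : G * G, A (fst p) /\ B (snd p) /\ y k = mul (fst p) (inv (snd p))).
  { intro k. destruct (Hy k) as [a [b [Ha [Hb E]]]]. exists (a, b). auto. }
  destruct (ch _ H) as [p Hp].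
  destruct (HA (fun k => fst (p k))) as [m1 [z1 [Hm1 Hc1]]]. { intro k. apply Hp. }
  destruct (HB (fun n => snd (p (m1 n)))) as [m2 [z2 [Hm2 Hc2]]]. { intro k. apply Hp. }
  exists (fun n => m1 (m2 n)), (mul z1 (inv z2)). split.
  - intro n. specialize (Hm1 (m2 n)); specialize (Hm2 n); lia.
  - assert (Hc : converges tau (fun n => mul (fst (p (m1 (m2 n)))) (inv (snd (p (m1 (m2 n)))))) (mul z1 (inv z2))).
    { apply (conv_mul tau mul (fun n => fst (p (m1 (m2 n)))) (fun n => inv (snd (p (m1 (m2 n)))))).
      - exact Hmc.
      - apply (conv_sub tau (fun n => fst (p (m1 n))) z1 m2); auto.
      - apply (conv_inv tau inv (fun n => snd (p (m1 (m2 n))))); auto. }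
    intros U HU Hz. destruct (Hc U HU Hz) as [N HN]. exists N. intros n Hn.
    destruct (Hp (m1 (m2 n))) as [_ [_ E]]. rewrite E. apply HN; auto.
Qed.

Lemma J_gen {G} (tau : (G->Prop)->Prop) s x : converges tau s x ->
  Jset tau (fun y => y = x \/ exists n, y = s n).
Proof.
  intros Hc y Hy.
  destruct (classic (forall N, exists k, (N <= k)%nat /\ exists j, (N <= j)%nat /\ y k = s j)) as [H|H].
  - destruct (ch _ H) as [m Hm]. exists m, x. split; [intro n; apply Hm|].
    intros U HU Hx. destruct (Hc U HU Hx) as [N HN]. exists N. intros n Hn.
    destruct (Hm n) as [_ [j [Hj E]]]. rewrite E. apply HN. lia.
  - apply not_all_ex_not in H. destruct H as [N HN].
    destruct (pigeon (x :: map s (seq 0 N)) y) as [a Ha].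
    { exists N. intros k Hk. destruct (Hy k) as [E|[j E]].
      - left. symmetry. auto.
      - right. apply in_map_iff. exists j. split; [symmetry; auto|]. apply in_seq.
        destruct (Nat.lt_ge_cases j N) as [Hj|Hj]; [lia|]. exfalso. apply HN.
        exists k. split; [auto|]. exists j. auto. }
    destruct (ch _ Ha) as [m Hm]. exists m, a. split; [intro n; apply Hm|].
    intros U HU Ha'. exists 0%nat. intros n _. destruct (Hm n) as [_ E]. rewrite E. auto.
Qed.

Lemma S_to_J {G} mul inv (e : G) tau : is_topological_group mul inv e tau ->
  forall A, S_tau mul inv tau A -> Jset tau A.
Proof.
  intros Htg A HA. apply HA.
  - split; [|split].
    + apply J_fin.
    + intros A0 B HA0 Hsub y Hy. apply HA0. intro k. apply Hsub. apply Hy.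
    + apply (J_mul mul inv e tau Htg).
  - intros s x Hc. apply J_gen. exact Hc.
Qed.

Lemma not_bb {G} mul inv (e : G) (tau : (G->Prop)->Prop) (c : nat -> G) :
  is_topological_group mul inv e tau ->
  (forall i j, c i = c j -> i = j) ->
  (forall (m : nat -> nat) z, (forall n, (n <= m n)%nat) -> ~ converges tau (fun n => c (m n)) z) ->
  ~ b_bounded (S_tau mul inv tau).
Proof.
  intros Htg Hinj Hnc Hb.
  set (f := fun g => match excluded_middle_informative (exists k, c k = g) with
            | left H => INR (proj1_sig (constructive_indefinite_description _ H)) | right _ => 0 end).
  assert (Hfc : forall k, f (c k) = INR k).
  { intro k. unfold f. destruct (excluded_middle_informative _) as [H|H].
    - destruct (constructive_indefinite_description _ H) as [k' Hk']. simpl. f_equal. apply Hinj; auto.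
    - exfalso. apply H. exists k. auto. }
  assert (Hf0 : forall g, f g = 0 \/ exists k, c k = g /\ f g = INR k).
  { intro g. unfold f. destruct (excluded_middle_informative _) as [H|H]; [right|left; auto].
    destruct (constructive_indefinite_description _ H) as [k' Hk']. simpl. exists k'. auto. }
  assert (Hborn : bornologous (S_tau mul inv tau) f).
  { intros B HB. pose proof (S_to_J mul inv e tau Htg B HB) as HJ.
    apply NNPP. intro Hn.
    assert (Ha : forall n : nat, exists x, B x /\ INR n < Rabs (f x)).
    { intro n. apply NNPP. intro Hn2. apply Hn. exists (INR n). intros x Hx. apply Rnot_lt_le.
      intro Hl. apply Hn2. exists x. auto. }
    destruct (ch _ Ha) as [a Haa].
    assert (Hk : forall n, exists k, c k = a n /\ (n < k)%nat).
    { intro n. destruct (Haa n) as [_ Hl]. destruct (Hf0 (a n)) as [E|[k [E1 E2]]].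
      - rewrite E, Rabs_R0 in Hl. pose proof (pos_INR n). lra.
      - exists k. split; auto. rewrite E2, Rabs_pos_eq in Hl by apply pos_INR. apply INR_lt. auto. }
    destruct (ch _ Hk) as [kk Hkk].
    destruct (HJ a (fun n => proj1 (Haa n))) as [m [z [Hm Hc]]].
    apply (Hnc (fun n => kk (m n)) z).
    - intro n. pose proof (proj2 (Hkk (m n))). specialize (Hm n). lia.
    - intros U HU Hz. destruct (Hc U HU Hz) as [N HN]. exists N. intros n Hn'.
      rewrite (proj1 (Hkk (m n))). apply HN; exact Hn'. }
  destruct (Hb f Hborn) as [M HM]. destruct (arch M) as [k Hk].
  specialize (HM (c k)). rewrite Hfc, Rabs_pos_eq in HM by apply pos_INR. lra.
Qed.

Definition itr {A} (x0 : A) (F : nat -> A -> A) : nat -> A :=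
  fix go n := match n with O => x0 | S k => F k (go k) end.

Lemma nd_seq {G} (d : G -> G -> R) (h : nat -> G) : is_metric d ->
  (forall z, exists j, h j = z) ->
  (forall g eps, 0 < eps -> exists y, y <> g /\ d g y < eps) ->
  exists c : nat -> G, (forall i j, c i = c j -> i = j) /\
   (forall (m : nat -> nat) z, (forall n, (n <= m n)%nat) ->
      ~ (forall eps, 0 < eps -> exists N, forall n, (N <= n)%nat -> d z (c (m n)) < eps)).
Proof.
  intros Hm Hsurj Hnd.
  pose proof Hm as [Hd0 [Hd1 [Hsym Htri]]].
  assert (Hdd : forall x, d x x = 0) by (intro; apply Hd1; auto).
  assert (Hpos : forall x y, x <> y -> 0 < d x y) by (apply d_pos; auto).
  assert (Hstep : forall q : nat * (G * R), exists p : G * R, 0 < snd (snd q) ->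
     0 < snd p /\ d (fst (snd q)) (fst p) < snd (snd q) / 2 /\ snd p <= snd (snd q) / 2 /\
     snd p < d (fst (snd q)) (fst p) /\ snd p < d (h (fst q)) (fst p)).
  { intros [k [c r]]. simpl. destruct (Rlt_or_le 0 r) as [Hr|Hr]; [|exists (c, r); intro; lra].
    assert (Hy : exists y, y <> c /\ y <> h k /\ d c y < r / 2).
    { destruct (classic (c = h k)) as [E|E].
      - destruct (Hnd c (r/2) ltac:(lra)) as [y [Hy1 Hy2]]. exists y. rewrite <- E.
        repeat split; auto.
      - destruct (Hnd c (Rmin (r/2) (d c (h k)))) as [y [Hy1 Hy2]].
        + apply Rmin_pos; [lra| apply Hpos; auto].
        + exists y. split; [auto|split].
          * intro Eq. subst y. pose proof (Rmin_r (r/2) (d c (h k))). lra.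
          * pose proof (Rmin_l (r/2) (d c (h k))). lra. }
    destruct Hy as [y [Hy1 [Hy2 Hy3]]].
    assert (P1 := Hpos c y (not_eq_sym Hy1)).
    assert (P2 := Hpos (h k) y (not_eq_sym Hy2)).
    exists (y, Rmin (r/2) (Rmin (d c y / 2) (d (h k) y / 2))). intros _. simpl.
    pose proof (Rmin_l (r/2) (Rmin (d c y / 2) (d (h k) y / 2))).
    pose proof (Rmin_r (r/2) (Rmin (d c y / 2) (d (h k) y / 2))).
    pose proof (Rmin_l (d c y / 2) (d (h k) y / 2)).
    pose proof (Rmin_r (d c y / 2) (d (h k) y / 2)).
    assert (0 < Rmin (r/2) (Rmin (d c y / 2) (d (h k) y / 2))) by (repeat apply Rmin_pos; lra).
    repeat split; lra. }
  destruct (ch _ Hstep) as [F HF].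
  set (cr := itr (h 0%nat, 1) (fun k p => F (k, p))).
  assert (HcrS : forall n, cr (S n) = F (n, cr n)) by (intro; reflexivity).
  assert (Hr : forall n, 0 < snd (cr n)).
  { induction n.
    - change (0 < 1). lra.
    - rewrite HcrS. exact (proj1 (HF (n, cr n) IHn)). }
  assert (Hs : forall n, d (fst (cr n)) (fst (cr (S n))) < snd (cr n) / 2 /\
     snd (cr (S n)) <= snd (cr n) / 2 /\ snd (cr (S n)) < d (fst (cr n)) (fst (cr (S n))) /\
     snd (cr (S n)) < d (h n) (fst (cr (S n)))).
  { intro n. rewrite !HcrS. exact (proj2 (HF (n, cr n) (Hr n))). }
  assert (Hnest : forall (t a : nat) y, d (fst (cr (t + a)%nat)) y <= snd (cr (t + a)%nat) ->
                                d (fst (cr a)) y <= snd (cr a)).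
  { induction t; intros a y H; [exact H|].
    apply IHt. change (S t + a)%nat with (S (t + a)) in H.
    destruct (Hs (t + a)%nat) as [H1 [H2 _]].
    pose proof (Htri (fst (cr (t+a)%nat)) (fst (cr (S (t+a)))) y). lra. }
  assert (Hle : forall a b, (a <= b)%nat -> d (fst (cr a)) (fst (cr b)) <= snd (cr a)).
  { intros a b Hab. apply (Hnest (b - a)%nat). replace (b - a + a)%nat with b by lia.
    rewrite Hdd. left. apply Hr. }
  assert (Hne : forall i j, (i < j)%nat -> fst (cr i) <> fst (cr j)).
  { intros i j Hij E. pose proof (Hle (S i) j Hij) as H.
    destruct (Hs i) as [_ [_ [H4 _]]]. rewrite <- E in H.
    rewrite (Hsym (fst (cr (S i)))) in H. lra. }
  exists (fun n => fst (cr n)). split.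
  - intros i j E. destruct (Nat.lt_total i j) as [H|[H|H]]; auto; exfalso.
    + exact (Hne i j H E).
    + exact (Hne j i H (eq_sym E)).
  - intros mm z Hmm Hconv. destruct (Hsurj z) as [j Hj]. subst z.
    destruct (Hs j) as [_ [_ [_ H4]]].
    destruct (Hconv (d (h j) (fst (cr (S j))) - snd (cr (S j)))) as [N HN]; [lra|].
    specialize (HN (N + S j)%nat ltac:(lia)).
    pose proof (Hle (S j) (mm (N + S j)%nat) ltac:(specialize (Hmm (N + S j)%nat); lia)).
    pose proof (Htri (h j) (fst (cr (mm (N + S j)%nat))) (fst (cr (S j)))).
    rewrite (Hsym (fst (cr (mm (N + S j)%nat)))) in *. lra.
Qed.

Lemma exists_c {G} mul inv (e : G) tau : is_topological_group mul inv e tau ->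
  countably_infinite G -> is_metrizable tau ->
  exists c : nat -> G, (forall i j, c i = c j -> i = j) /\
   (forall (m : nat -> nat) z, (forall n, (n <= m n)%nat) -> ~ converges tau (fun n => c (m n)) z).
Proof.
  intros Htg [h [Hinj Hsurj]] [d [Hm Hiff]].
  destruct (classic (forall g eps, 0 < eps -> exists y, y <> g /\ d g y < eps)) as [Hnd|Hnd].
  - destruct (nd_seq d h Hm Hsurj Hnd) as [c [Hci Hcn]]. exists c. split; auto.
    intros m z Hmm Hc. apply (Hcn m z Hmm). apply (conv_metric tau d Hm Hiff _ _ Hc).
  - assert (H0 : exists g0 eps0, 0 < eps0 /\ forall y, d g0 y < eps0 -> y = g0).
    { apply NNPP. intro Hn. apply Hnd. intros g eps He. apply NNPP. intro Hn2. apply Hn.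
      exists g, eps. split; auto. intros y Hy. apply NNPP. intro Hyg. apply Hn2. exists y. auto. }
    destruct H0 as [g0 [eps0 [He0 Hg0]]].
    assert (Hiso : forall g, exists eps, 0 < eps /\ forall y, d g y < eps -> y = g).
    { intro g. destruct Htg as [[Hass [Hel [Her [Hil Hir]]]] [_ [Hmc _]]].
      set (a := mul g0 (inv g)).
      assert (Hag : mul a g = g0). { unfold a. rewrite <- Hass, Hil, Her. auto. }
      destruct (Hmc (fun y => d g0 y < eps0) a g) as [V [W [HV [HW [Va [Wg Hvw]]]]]].
      - apply (ball_open tau d Hm Hiff).
      - rewrite Hag. destruct Hm as [_ [H1 _]]. assert (d g0 g0 = 0) by (apply H1; auto). lra.
      - destruct (proj1 (Hiff W) HW g Wg) as [eps [He Hb]]. exists eps. split; auto.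
        intros y Hy. pose proof (Hvw a y Va (Hb y Hy)) as Hd. apply Hg0 in Hd.
        assert (E : mul (inv a) (mul a y) = mul (inv a) (mul a g)) by (rewrite Hd, Hag; auto).
        rewrite !Hass, Hil, !Hel in E. auto. }
    exists h. split; auto.
    intros m z Hmm Hc. destruct (Hiso z) as [eps [He Hi]].
    destruct (conv_metric tau d Hm Hiff _ _ Hc eps He) as [N HN].
    destruct (Hsurj z) as [j Hj].
    specialize (HN (N + j + 1)%nat ltac:(lia)). apply Hi in HN. rewrite <- Hj in HN.
    apply Hinj in HN. specialize (Hmm (N + j + 1)%nat). lia.
Qed.

Theorem theorem9 (G : Type) (mul : G -> G -> G) (inv : G -> G) (e : G)
    (tau : (G -> Prop) -> Prop) :
  is_topological_group mul inv e tau -> is_hausdorff tau ->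
  (is_metrizable tau -> is_compact tau -> b_bounded (S_tau mul inv tau)) /\
  (countably_infinite G -> is_metrizable tau -> ~ b_bounded (S_tau mul inv tau)).
Proof.
  intros Htg Hh. split.
  - apply part1.
  - intros Hci Hmet. destruct (exists_c mul inv e tau Htg Hci Hmet) as [c [Hinj Hnc]].
    exact (not_bb mul inv e tau c Htg Hinj Hnc).
Qed.
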